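(* Let $x\in(0,1)$ and let $((a_n,\varepsilon_n))_{n\ge1}$ be an infinite OOCF expansion of $x$. Then for every $n\ge1$, $x$ lies in the closed interval with endpoints $p_n/q_n$ and $p_n''/q_n''$; if $x$ is irrational it lies strictly between them.
   Context: Admissible digits: $D=\{(1,1)\}\cup\{(a,\varepsilon): a\in\mathbb Z,\ a\ge2,\ \varepsilon\in\{-1,1\}\}$. For integers $k\ge1$ put $B(k+1,-1)=\left[\frac{k-1}{k},\frac{2k-1}{2k+1}\right]$ and $B(k,1)=\left[\frac{2k-1}{2k+1},\frac{k}{k+1}\right]$. The OOCF map $T:[0,1]\to[0,1]$ is $T(x)=\frac{kx-(k-1)}{k-(k+1)x}$ for $x\in B(k+1,-1)$, $T(x)=\frac{k-(k+1)x}{kx-(k-1)}$ for $x\in B(k,1)$ ($k\ge1$; formulas agree at common endpoints), and $T(1)=1$. An infinite OOCF expansion of $x\in[0,1]$ is a sequence $((a_n,\varepsilon_n))_{n\ge1}$ in $D$ with $T^{n-1}(x)\in B(a_n,\varepsilon_n)$ and $T^{n-1}(x)\neq1$ for all $n\ge1$. For $n\ge1$, with $M=\begin{pmatrix}1&-1\\1&0\end{pmatrix}$, $J=\begin{pmatrix}2&-1\\1&0\end{pmatrix}$, $E(a,\varepsilon)=\begin{pmatrix}a&\varepsilon\\1&0\end{pmatrix}$, define integers by $M E(a_1,\varepsilon_1) J\cdots J E(a_n,\varepsilon_n) J=\begin{pmatrix}p_n&-p_n'\\ q_n&-q_n'\end{pmatrix}$ and $\begin{pmatrix}p_n''\\ q_n''\end{pmatrix}=M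 E(a_1,\varepsilon_1) J\cdots J E(a_n,\varepsilon_n)\begin{pmatrix}1\\1\end{pmatrix}$. Thus $p_n/q_n$ is the finite continued fraction $1-\cfrac{1}{a_1+\cfrac{\varepsilon_1}{2-\cfrac{1}{\ddots\ \cfrac{\varepsilon_{n-1}}{2-\cfrac{1}{a_n+\varepsilon_n/2}}}}}$ (principal convergent) and $p_n''/q_n''$ is the same with last term $a_n+\varepsilon_n$ (pseudo-convergent). *)

(* Defs.v *)
From Stdlib Require Import Reals ZArith.
Open Scope R_scope.

Definition admissible (a e : Z) : Prop :=
  (a = 1%Z /\ e = 1%Z) \/ ((2 <= a)%Z /\ (e = (-1)%Z \/ e = 1%Z)).

Definition inB (a e : Z) (y : R) : Prop :=
  (e = (-1)%Z /\ exists k : Z, (1 <= k)%Z /\ a = (k + 1)%Z /\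
     (IZR k - 1) / IZR k <= y <= (2 * IZR k - 1) / (2 * IZR k + 1))
  \/
  (e = 1%Z /\ exists k : Z, (1 <= k)%Z /\ a = k /\
     (2 * IZR k - 1) / (2 * IZR k + 1) <= y <= IZR k / (IZR k + 1)).

(* For x ∈ [0,1), the integer k >= 1 with
   x ∈ [(k-1)/k, k/(k+1)) = B(k+1,-1) ∪ B(k,1) is floor(1/(1-x));
   on B(k+1,-1) (x <= (2k-1)/(2k+1)) and on B(k,1) the two formulas apply
   (they agree at the common endpoints, so this choice is immaterial). *)
Definition T (x : R) : R :=
  if Req_EM_T x 1 then 1 else
  let k := IZR (Int_part (1 / (1 - x))) in
  if Rle_dec x ((2 * k - 1) / (2 * k + 1))
  then (k * x - (k - 1)) / (k - (k + 1) * x)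
  else (k - (k + 1) * x) / (k * x - (k - 1)).

Record mat2 := Mat2 { m11 : Z; m12 : Z; m21 : Z; m22 : Z }.

Definition mmul (A B : mat2) : mat2 :=
  Mat2 (m11 A * m11 B + m12 A * m21 B)%Z (m11 A * m12 B + m12 A * m22 B)%Z
       (m21 A * m11 B + m22 A * m21 B)%Z (m21 A * m12 B + m22 A * m22 B)%Z.

Definition Mmat : mat2 := Mat2 1 (-1) 1 0.
Definition Jmat : mat2 := Mat2 2 (-1) 1 0.
Definition Emat (a e : Z) : mat2 := Mat2 a e 1 0.

(* Digits are given by sequences a, eps : nat -> Z, indexed from 1
   (the values at index 0 are irrelevant).
   prodMEJ a eps n = M E(a_1,e_1) J ... J E(a_n,e_n) J   (n >= 0; = M for n = 0). *)
Fixpoint prodMEJ (a eps : nat -> Z) (n : nat) : mat2 :=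
  match n with
  | O => Mmat
  | S m => mmul (mmul (prodMEJ a eps m) (Emat (a (S m)) (eps (S m)))) Jmat
  end.

Definition p_ (a eps : nat -> Z) (n : nat) : Z := m11 (prodMEJ a eps n).
Definition q_ (a eps : nat -> Z) (n : nat) : Z := m21 (prodMEJ a eps n).

Definition pp_ (a eps : nat -> Z) (n : nat) : Z :=
  let P := mmul (prodMEJ a eps (pred n)) (Emat (a n) (eps n)) in (m11 P + m12 P)%Z.
Definition qq_ (a eps : nat -> Z) (n : nat) : Z :=
  let P := mmul (prodMEJ a eps (pred n)) (Emat (a n) (eps n)) in (m21 P + m22 P)%Z.

Definition OOCF_expansion (x : R) (a eps : nat -> Z) : Prop :=
  forall n : nat, (1 <= n)%nat ->
    admissible (a n) (eps n) /\
    inB (a n) (eps n) (Nat.iter (pred n) T x) /\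
    Nat.iter (pred n) T x <> 1.

Definition irrational (x : R) : Prop :=
  ~ exists (p q : Z), q <> 0%Z /\ x = IZR p / IZR q.

(* Main.v *)
Require Import Defs.
From Stdlib Require Import Reals ZArith Lra Lia Psatz.
Open Scope R_scope.

Lemma le_div_l (a b c : R) : 0 < b -> a / b <= c -> a <= c * b.
Proof.
  intros Hb H. apply Rmult_le_compat_r with (r := b) in H; [|lra].
  replace (a / b * b) with a in H by (field; lra). lra.
Qed.

Lemma le_div_r (a b c : R) : 0 < b -> c <= a / b -> c * b <= a.
Proof.
  intros Hb H. apply Rmult_le_compat_r with (r := b) in H; [|lra].
  replace (a / b * b) with a in H by (field; lra). lra.
Qed.

Lemma lt_div_r (a b c : R) : 0 < b -> a / b < c -> a < c * b.
Proof.
  intros Hb H. apply Rmult_lt_compat_r with (r := b) in H; [|lra].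
  replace (a / b * b) with a in H by (field; lra). lra.
Qed.

Lemma inB_cases a e z : inB a e z ->
  (exists k, (1 <= k)%Z /\ a = (k + 1)%Z /\ e = (-1)%Z /\
     IZR k * (1 - z) <= 1 /\ 2 <= (2 * IZR k + 1) * (1 - z)) \/
  (exists k, (1 <= k)%Z /\ a = k /\ e = 1%Z /\
     (2 * IZR k + 1) * (1 - z) <= 2 /\ 1 <= (IZR k + 1) * (1 - z)).
Proof.
  intros [[He [k [Hk [Ha [H1 H2]]]]] | [He [k [Hk [Ha [H1 H2]]]]]].
  - left. exists k. pose proof (IZR_le _ _ Hk) as Hk'.
    apply le_div_l in H1; [|lra]. apply le_div_r in H2; [|lra].
    repeat split; auto; nra.
  - right. exists k. pose proof (IZR_le _ _ Hk) as Hk'.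
    apply le_div_l in H1; [|lra]. apply le_div_r in H2; [|lra].
    repeat split; auto; nra.
Qed.

Lemma inB_range a e z : inB a e z -> 0 <= z <= 1.
Proof.
  intros H. destruct (inB_cases _ _ _ H) as [[k [Hk [_ [_ [H1 H2]]]]]|[k [Hk [_ [_ [H1 H2]]]]]];
  pose proof (IZR_le _ _ Hk); split; nra.
Qed.

Lemma relR a e z : inB a e z -> z <> 1 ->
  (1 - z) * (IZR a + IZR e + IZR a * T z) = 1 + T z.
Proof.
  intros HB Hz1.
  assert (Hu : 0 < 1 - z).
  { destruct (inB_cases _ _ _ HB) as [[k [Hk [_ [_ [H1 H2]]]]]|[k [Hk [_ [_ [H1 H2]]]]]];
    apply IZR_le in Hk; nra. }
  unfold T. destruct (Req_EM_T z 1) as [E|_]; [contradiction|].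
  pose proof (base_Int_part (1 / (1 - z))) as [HK1 HK2].
  remember (Int_part (1 / (1 - z))) as K eqn:HKdef. clear HKdef.
  apply le_div_r in HK1; [|lra].
  assert (HK2' : 1 < (IZR K + 1) * (1 - z)).
  { assert (1/(1-z) < IZR K + 1) by lra. apply lt_div_r in H; lra. }
  cbv zeta.
  assert (HK0 : 0 <= IZR K).
  { assert (-1 < K)%Z by (apply lt_IZR; nra). apply IZR_le; lia. }
  destruct (inB_cases _ _ _ HB) as [[k [Hk [Ha [He [H1 H2]]]]]|[k [Hk [Ha [He [H1 H2]]]]]];
    subst a e; rewrite ?plus_IZR.
  - assert (Hkk : K = k).
    { assert (k <= K)%Z.
      { destruct (Z_le_gt_dec k K) as [|Hg]; auto.
        assert (IZR K + 1 <= IZR k) by (rewrite <- plus_IZR; apply IZR_le; lia). nra. }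
      assert (K <= k)%Z.
      { destruct (Z_le_gt_dec K k) as [|Hg]; auto.
        assert (IZR k + 1 <= IZR K) by (rewrite <- plus_IZR; apply IZR_le; lia). nra. }
      lia. }
    subst K.
    destruct (Rle_dec z ((2 * IZR k - 1) / (2 * IZR k + 1))) as [Hb|Hb].
    + set (t := (IZR k * z - (IZR k - 1)) / (IZR k - (IZR k + 1) * z)).
      assert (Ht : t * (IZR k - (IZR k + 1) * z) = IZR k * z - (IZR k - 1))
        by (unfold t; field; nra).
      clearbody t.
      assert (Hg : (1 - z) * (IZR k + 1 + -1 + (IZR k + 1) * t) - (1 + t) =
        t * (IZR k - (IZR k + 1) * z) - (IZR k * z - (IZR k - 1))) by ring.
      lra.
    + apply Rnot_le_lt in Hb. apply lt_div_r in Hb; [|lra]. exfalso. nra.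
  - assert (Hk' := IZR_le _ _ Hk).
    assert (HKk : K = k \/ (K = k + 1)%Z).
    { assert (K <= k + 1)%Z.
      { destruct (Z_le_gt_dec K (k+1)) as [|Hg]; auto.
        assert (IZR k + 2 <= IZR K) by (replace 2 with (IZR 2) by reflexivity;
          rewrite <- plus_IZR; apply IZR_le; lia). nra. }
      assert (k <= K)%Z.
      { destruct (Z_le_gt_dec k K) as [|Hg]; auto.
        assert (IZR K + 1 <= IZR k) by (rewrite <- plus_IZR; apply IZR_le; lia). nra. }
      lia. }
    destruct HKk as [HKk|HKk]; subst K; rewrite ?plus_IZR in *.
    + destruct (Rle_dec z ((2 * IZR k - 1) / (2 * IZR k + 1))) as [Hb|Hb].
      * apply le_div_r in Hb; [|lra].
        set (t := (IZR k * z - (IZR k - 1)) / (IZR k - (IZR k + 1) * z)).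
        assert (Ht : t * (IZR k - (IZR k + 1) * z) = IZR k * z - (IZR k - 1))
          by (unfold t; field; nra).
        clearbody t.
        assert (Ez : (2 * IZR k + 1) * z - (2 * IZR k - 1) = 0) by nra.
        assert (Et : t * ((2 * IZR k + 1) * z - (2 * IZR k - 1)) = 0) by (rewrite Ez; ring).
        assert (Hg : (1 - z) * (IZR k + 1 + IZR k * t) - (1 + t) =
          (IZR k - (IZR k + 1) * z) - t * (IZR k - (IZR k + 1) * z)
          - t * ((IZR k * z - (IZR k - 1)) - (IZR k - (IZR k + 1) * z))) by ring.
        nra.
      * apply Rnot_le_lt in Hb. apply lt_div_r in Hb; [|lra].
        set (t := (IZR k - (IZR k + 1) * z) / (IZR k * z - (IZR k - 1))).
        assert (Ht : t * (IZR k * z - (IZR k - 1)) = IZR k - (IZR k + 1) * z)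
          by (unfold t; field; nra).
        clearbody t.
        assert (Hg : (1 - z) * (IZR k + 1 + IZR k * t) - (1 + t) =
          (IZR k - (IZR k + 1) * z) - t * (IZR k * z - (IZR k - 1))) by ring.
        lra.
    + destruct (Rle_dec z ((2 * (IZR k + 1) - 1) / (2 * (IZR k + 1) + 1))) as [Hb|Hb].
      * set (t := ((IZR k + 1) * z - (IZR k + 1 - 1)) / (IZR k + 1 - (IZR k + 1 + 1) * z)).
        assert (HD : IZR k + 1 - (IZR k + 1 + 1) * z <> 0) by nra.
        assert (Ht : t * (IZR k + 1 - (IZR k + 1 + 1) * z) = (IZR k + 1) * z - (IZR k + 1 - 1))
          by (unfold t; field; auto).
        clearbody t.
        assert (Ht0 : t = 0).
        { assert (HN : (IZR k + 1) * z - (IZR k + 1 - 1) = 0) by nra.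
          rewrite HN in Ht. apply Rmult_integral in Ht. destruct Ht; [auto|contradiction]. }
        subst t. nra.
      * apply Rnot_le_lt in Hb. apply lt_div_r in Hb; [|lra]. exfalso. nra.
Qed.

Lemma adm_facts a e : admissible a e -> (1 <= a)%Z /\ (1 <= a + e)%Z.
Proof. unfold admissible; lia. Qed.

Lemma inv_pos (a eps : nat -> Z) (n : nat) :
  (forall m, (1 <= m)%nat -> admissible (a m) (eps m)) ->
  (0 < m21 (prodMEJ a eps n))%Z /\ (0 < m21 (prodMEJ a eps n) + m22 (prodMEJ a eps n))%Z /\
  (m22 (prodMEJ a eps n) <= 0)%Z.
Proof.
  intros Had. induction n as [|n IH].
  - simpl. lia.
  - cbn [prodMEJ]. destruct (prodMEJ a eps n) as [al be ga de]. cbn in IH |- *.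
    destruct (adm_facts _ _ (Had (S n) ltac:(lia))) as [Ha Hae].
    destruct IH as [H1 [H2 H3]]. nia.
Qed.

Lemma rel_S (x : R) (a eps : nat -> Z) (n : nat) :
  OOCF_expansion x a eps ->
  let Q := prodMEJ a eps n in
  let y := Nat.iter n T x in
  x * (IZR (m21 Q) + IZR (m22 Q) * (1 - y)) = IZR (m11 Q) + IZR (m12 Q) * (1 - y).
Proof.
  intros Hexp. induction n as [|n IH]; cbv zeta in *.
  - simpl. ring.
  - destruct (Hexp (S n) ltac:(lia)) as [_ [HB Hne]]. simpl pred in HB, Hne.
    pose proof (relR _ _ _ HB Hne) as R.
    change (Nat.iter (S n) T x) with (T (Nat.iter n T x)).
    set (y := Nat.iter n T x) in *. set (y' := T y) in *.
    cbn [prodMEJ]. destruct (prodMEJ a eps n) as [al be ga de]. cbn in IH |- *.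
    set (c := IZR (a (S n)) + IZR (eps (S n)) + IZR (a (S n)) * y') in *.
    repeat (rewrite plus_IZR || rewrite mult_IZR || rewrite opp_IZR).
    apply Rminus_diag_uniq.
    apply Rminus_diag_eq in IH.
    assert (R0 : (1 - y) * c - (1 + y') = 0) by lra.
    match goal with |- ?L = 0 =>
      assert (Hg : L = c * (x * (IZR ga + IZR de * (1 - y)) - (IZR al + IZR be * (1 - y)))
                     - (x * IZR de - IZR be) * ((1 - y) * c - (1 + y'))) by (unfold c; ring) end.
    rewrite Hg, IH, R0. ring.
Qed.

Lemma between (x y D1 D2 N1 N2 : R) : 0 < D1 -> 0 < D2 -> 0 <= y <= 1 ->
  x * (y * D1 + (1 - y) * D2) = y * N1 + (1 - y) * N2 ->
  Rmin (N1 / D1) (N2 / D2) <= x <= Rmax (N1 / D1) (N2 / D2).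
Proof.
  intros H1 H2 Hy Hx.
  set (r1 := N1 / D1). set (r2 := N2 / D2).
  assert (E1 : N1 = r1 * D1) by (unfold r1; field; lra).
  assert (E2 : N2 = r2 * D2) by (unfold r2; field; lra).
  rewrite E1, E2 in Hx. clearbody r1 r2.
  set (S := y * D1 + (1 - y) * D2) in *.
  assert (HS : 0 < S) by (unfold S; nra).
  assert (A1 : (x - r1) * S = (1 - y) * D2 * (r2 - r1)) by (unfold S in *; rewrite Rmult_minus_distr_r, Hx; ring).
  assert (A2 : (x - r2) * S = y * D1 * (r1 - r2)) by (unfold S in *; rewrite Rmult_minus_distr_r, Hx; ring).
  clearbody S.
  assert (Y1 : 0 <= y * D1) by nra. assert (Y2 : 0 <= (1 - y) * D2) by nra.
  unfold Rmin, Rmax. destruct (Rle_dec r1 r2).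
  - split.
    + assert (0 <= (x - r1) * S) by (rewrite A1; apply Rmult_le_pos; lra). nra.
    + assert ((x - r2) * S <= 0) by (rewrite A2; nra). nra.
  - split.
    + assert (0 <= (x - r2) * S) by (rewrite A2; apply Rmult_le_pos; lra). nra.
    + assert ((x - r1) * S <= 0) by (rewrite A1; nra). nra.
Qed.

Theorem lemma3p5 (x : R) (a eps : nat -> Z) :
  0 < x < 1 ->
  OOCF_expansion x a eps ->
  forall n : nat, (1 <= n)%nat ->
    let r := IZR (p_ a eps n) / IZR (q_ a eps n) in
    let r' := IZR (pp_ a eps n) / IZR (qq_ a eps n) in
    (Rmin r r' <= x <= Rmax r r') /\
    (irrational x -> Rmin r r' < x < Rmax r r').
Proof.
  intros Hx Hexp n Hn r r'.
  destruct n as [|m]; [lia|].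
  destruct (Hexp (S (S m)) ltac:(lia)) as [_ [HB Hne]]. simpl pred in HB, Hne.
  pose proof (inB_range _ _ _ HB) as Hy.
  pose proof (rel_S x a eps (S m) Hexp) as HS. cbv zeta in HS.
  assert (Had : forall k, (1 <= k)%nat -> admissible (a k) (eps k))
    by (intros k Hk; apply (Hexp k Hk)).
  pose proof (inv_pos a eps (S m) Had) as Hpos.
  assert (Epp : pp_ a eps (S m) = (m11 (prodMEJ a eps (S m)) + m12 (prodMEJ a eps (S m)))%Z /\
                qq_ a eps (S m) = (m21 (prodMEJ a eps (S m)) + m22 (prodMEJ a eps (S m)))%Z).
  { unfold pp_, qq_. cbn [prodMEJ pred]. destruct (prodMEJ a eps m). cbn. split; ring. }
  destruct Epp as [Epp Eqq].
  unfold r, r', p_, q_ in *. rewrite Epp, Eqq in *.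
  set (y := Nat.iter (S m) T x) in *.
  destruct (prodMEJ a eps (S m)) as [al be ga de]. cbn in Hpos, HS |- *.
  destruct Hpos as [P1 [P2 P3]].
  apply IZR_lt in P1. apply IZR_lt in P2.
  rewrite !plus_IZR in *.
  assert (Hb : Rmin (IZR al / IZR ga) ((IZR al + IZR be) / (IZR ga + IZR de)) <= x <=
               Rmax (IZR al / IZR ga) ((IZR al + IZR be) / (IZR ga + IZR de))).
  { apply (between x y); try lra.
    replace (y * IZR ga + (1 - y) * (IZR ga + IZR de)) with (IZR ga + IZR de * (1 - y)) by ring.
    assert (HS' : x * (IZR ga + IZR de * (1 - y)) = IZR al + IZR be * (1 - y)) by exact HS.
    rewrite HS'. ring. }
  split; [exact Hb|].
  intros Hirr.
  assert (N1 : x <> IZR al / IZR ga).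
  { intro E. apply Hirr. exists al, ga. split; [|exact E]. intro G; subst; simpl in P1; lra. }
  assert (N2 : x <> (IZR al + IZR be) / (IZR ga + IZR de)).
  { intro E. apply Hirr. exists (al + be)%Z, (ga + de)%Z. rewrite !plus_IZR. split; [|exact E].
    intro G. rewrite <- plus_IZR, G in P2. simpl in P2. lra. }
  unfold Rmin, Rmax in *. destruct Rle_dec; split; destruct Hb; lra.
Qed.
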